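(* Fix a question $q$ and a reference answer $a^*$. Let $\mathcal{S}$ (solutions) and $\mathcal{A}$ (answers) be countable sets, let $\pi_\theta(\cdot\mid q)$ be a probability distribution on $\mathcal{S}$, and for each $s\in\mathcal{S}$ let $\pi_\theta(\cdot\mid s,q)$ be a probability distribution on $\mathcal{A}$, so that the joint law of $(S,A)$ is $\pi_\theta(a,s\mid q)=\pi_\theta(s\mid q)\,\pi_\theta(a\mid s,q)$. Assume $\Pr(A=a^* )=\sum_{s}\pi_\theta(s\mid q)\pi_\theta(a^*\mid s,q)>0$. Define the conditional expectation reward $$\rho(a^*,a^* )=\mathbb{E}_{s'\sim\pi_\theta(\cdot\mid q)}\big[\pi_\theta(a^*\mid s',q)\,\big|\,A=a^*\big]=\sum_{s'\in\mathcal{S}}\pi_\theta(s'\mid q,a^* )\,\pi_\theta(a^*\mid s',q),$$ where $\pi_\theta(s'\mid q,a^* )=\dfrac{\pi_\theta(s'\mid q)\pi_\theta(a^*\mid s',q)}{\sum_{s''}\pi_\theta(s''\mid q)\pi_\theta(a^*\mid s'',q)}$. Then $$\rho(a^*,a^* )\;\ge\;\mathbb{E}_{s\sim\pi_\theta(\cdot\mid q)}\big[\pi_\theta(a^*\mid s,q)\big],$$ with equality if and only if $\pi_\theta(a^*\mid s,q)$ is constant over all $s$ with $\pi_\theta(s\mid q)>0$.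
   Context: A policy $\pi_\theta$ generates, given a question $q$, a solution $s$ and then an answer $a$; the conditional expectation reward (CER) of a generated answer $a$ with respect to a reference answer $a^*$ is $\rho(a,a^* )=\sum_{s'}\pi_\theta(s'\mid q,a)\,\pi_\theta(a^*\mid s',q)$, defined for answers $a$ with positive marginal probability under the policy. *)

(* Defs.v *)
From HB Require Import structures.
From mathcomp Require Import all_boot all_order all_algebra.
From mathcomp Require Import all_classical all_reals.
From mathcomp Require Import ereal esum.
Set Implicit Arguments. Unset Strict Implicit. Unset Printing Implicit Defensive.
Import Order.TTheory GRing.Theory Num.Theory.
Local Open Scope classical_set_scope.
Local Open Scope ring_scope.
Local Open Scope ereal_scope.

Definition is_pmf (R : realType) (T : countType) (p : T -> R) : Prop :=
  (forall t, (0 <= p t)%R) /\ \esum_(t in [set: T]) (p t)%:E = 1.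

Definition ans_prob (R : realType) (S A : countType)
  (p : S -> R) (k : S -> A -> R) (a : A) : \bar R :=
  \esum_(s in [set: S]) (p s * k s a)%:E.

Definition posterior (R : realType) (S A : countType)
  (p : S -> R) (k : S -> A -> R) (a : A) (s : S) : R :=
  (p s * k s a / fine (ans_prob p k a))%R.

(* Conditional expectation reward rho(a, astar) for the generated answer a
   and the reference answer astar:
   rho = sum_s' pi(s'|q,a) pi(astar|s',q). *)
Definition cer (R : realType) (S A : countType)
  (p : S -> R) (k : S -> A -> R) (a astar : A) : \bar R :=
  \esum_(s in [set: S]) (posterior p k a s * k s astar)%:E.

Definition exp_reward (R : realType) (S A : countType)
  (p : S -> R) (k : S -> A -> R) (astar : A) : \bar R :=
  \esum_(s in [set: S]) (p s * k s astar)%:E.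

(* Main.v *)
Require Import Defs.
From HB Require Import structures.
From mathcomp Require Import all_boot all_order all_algebra.
From mathcomp Require Import all_classical all_reals.
From mathcomp Require Import ereal esum.
From mathcomp Require Import ring lra.
Import Order.TTheory GRing.Theory Num.Theory.
Local Open Scope classical_set_scope.
Local Open Scope ring_scope.
Local Open Scope ereal_scope.

Lemma my_esumZ {R : realType} {T : choiceType} (a : T -> \bar R) (r : R) :
  (0 <= r)%R -> (forall i, 0 <= a i) ->
  \esum_(i in [set: T]) (r%:E * a i) = r%:E * \esum_(i in [set: T]) a i.
Proof.
move=> r0 a0; rewrite /esum -ereal_supZl//; last first.
  by apply/set0P; exists (\sum_(i \in set0) a i); exists set0 => //; exact: fsets_set0.
congr ereal_sup; apply/seteqP; split => x /=.
- move=> [B HB <-]; exists (\sum_(i \in B) a i); first by exists B.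
  by rewrite ge0_mule_fsumr.
- move=> [y [B HB <-] <-]; exists B => //; by rewrite ge0_mule_fsumr.
Qed.

Lemma my_esum_ge1 {R : realType} {T : choiceType} (a : T -> \bar R) t :
  a t <= \esum_(i in [set: T]) a i.
Proof.
apply: esum_ge; exists [set t]; last by rewrite fsbig_set1.
by split; [exact: finite_set1|].
Qed.

Lemma helper1 {R : realType} (a b c : R) : (a * b / c * b = c^-1 * (a * b ^+ 2))%R.
Proof. ring. Qed.

Lemma helper2 {R : realType} (p x r : R) :
  (p * x ^+ 2 + r ^+ 2 * p = p * (x - r) ^+ 2 + 2 * r * (p * x))%R.
Proof. ring. Qed.

Lemma helper3 {R : realType} (q v r : R) :
  (q + r ^+ 2 = v + 2 * r * r -> q = v + r ^+ 2)%R.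
Proof. move=> H; apply: (addIr (r ^+ 2)%R); rewrite H; ring. Qed.

Lemma helper4 {R : realType} (v r : R) :
  (r != 0 -> r^-1 * (v + r ^+ 2) = r^-1 * v + r)%R.
Proof. move=> H; field. exact H. Qed.

Theorem theorem1 (R : realType) (S A : countType)
  (p : S -> R) (k : S -> A -> R) (astar : A) :
  is_pmf p ->
  (forall s, is_pmf (k s)) ->
  0 < ans_prob p k astar ->
  exp_reward p k astar <= cer p k astar astar /\
  (cer p k astar astar = exp_reward p k astar <->
   exists c : R, forall s, (0 < p s)%R -> k s astar = c).
Proof.
rewrite /is_pmf => -[p0 p1] hk hP.
set X := fun s => k s astar.
have X0 s : (0 <= X s)%R by exact: (proj1 (hk s)).
have X1 s : (X s <= 1)%R.
  have := my_esum_ge1 (fun t => (k s t)%:E) astar.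
  by rewrite (proj2 (hk s)) lee_fin.
have pX0 s : (0 <= p s * X s)%R by rewrite mulr_ge0.
have Ple1 : ans_prob p k astar <= 1.
  rewrite -p1; apply: le_esum => s _; rewrite lee_fin; apply: ler_piMr; [exact: p0 | exact: X1].
have Pfin : ans_prob p k astar \is a fin_num.
  by rewrite ge0_fin_numE ?(ltW hP)// (le_lt_trans Ple1) ?ltry.
set r := fine (ans_prob p k astar).
have Pr : ans_prob p k astar = r%:E by rewrite fineK.
have r0 : (0 < r)%R by rewrite -lte_fin -Pr.
have r1 : (r <= 1)%R by rewrite -lee_fin -Pr.
have Er : exp_reward p k astar = r%:E by rewrite -Pr.
set Q := \esum_(s in [set: S]) (p s * X s ^+ 2)%:E.
have Q0 : 0 <= Q by apply: esum_ge0 => s _; rewrite lee_fin mulr_ge0 ?sqr_ge0.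
have QP : Q <= r%:E.
  rewrite -Pr; apply: le_esum => s _; rewrite lee_fin expr2 mulrA.
  exact: ler_piMr.
have Qfin : Q \is a fin_num by rewrite ge0_fin_numE// (le_lt_trans QP) ?ltry.
set q := fine Q.
have Qq : Q = q%:E by rewrite fineK.
have Ecer : cer p k astar astar = (r^-1 * q)%:E.
  rewrite /cer EFinM -Qq -my_esumZ ?invr_ge0 ?ltW//; last first.
    by move=> s; rewrite lee_fin mulr_ge0 ?sqr_ge0.
  apply: eq_esum => s _; rewrite /posterior -/r -EFinM; congr EFin.
  exact: helper1.
set V := \esum_(s in [set: S]) (p s * (X s - r) ^+ 2)%:E.
have V0 : 0 <= V by apply: esum_ge0 => s _; rewrite lee_fin mulr_ge0 ?sqr_ge0.
have key : Q + (r ^+ 2)%:E = V + (2 * r * r)%:E.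
  have -> : (r ^+ 2)%:E = \esum_(s in [set: S]) ((r ^+ 2)%:E * (p s)%:E).
    by rewrite my_esumZ ?sqr_ge0// p1 mule1.
  have -> : (2 * r * r)%:E = \esum_(s in [set: S]) ((2 * r)%:E * (p s * X s)%:E).
    by rewrite my_esumZ ?mulr_ge0 ?ltW// -/(ans_prob p k astar) Pr -EFinM.
  have h1 s : (0 <= p s * X s ^+ 2)%R by apply: mulr_ge0; [exact: p0 | exact: sqr_ge0].
  have h2 s : (0 <= p s * (X s - r) ^+ 2)%R by apply: mulr_ge0; [exact: p0 | exact: sqr_ge0].
  have h3 s : (0 <= r ^+ 2 * p s)%R by apply: mulr_ge0; [exact: sqr_ge0 | exact: p0].
  have h4 s : (0 <= 2 * r * (p s * X s))%R by apply: mulr_ge0; [apply: mulr_ge0; [by []| exact: ltW] | exact: pX0].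
  rewrite -!esumD //; last first.
  all: try by move=> s _; rewrite -?EFinM lee_fin ?h1 ?h2 ?h3 ?h4.
  apply: eq_esum => s _; rewrite -!EFinM -!EFinD; congr EFin.
  exact: helper2.
have Vfin : V \is a fin_num.
  rewrite ge0_fin_numE//; apply: (@le_lt_trans _ _ (V + (2 * r * r)%:E)).
    by rewrite leeDl// lee_fin !mulr_ge0 ?ltW.
  by rewrite -key Qq -EFinD ltry.
set v := fine V.
have Vv : V = v%:E by rewrite fineK.
have v0 : (0 <= v)%R by rewrite -lee_fin -Vv.
have qv : q = (v + r ^+ 2)%R.
  apply: helper3; apply: EFin_inj; rewrite !EFinD -Qq -Vv; exact: key.
have Hc : (r^-1 * q = r^-1 * v + r)%R by rewrite qv; apply: helper4; rewrite gt_eqF.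
split.
  rewrite Er Ecer lee_fin Hc lerDr mulr_ge0// invr_ge0 ltW//.
rewrite Er Ecer; split.
- move=> H0; have H1 := EFin_inj H0; move: H1; rewrite Hc => /eqP; rewrite -subr_eq0 addrK mulf_eq0 invr_eq0.
  rewrite gt_eqF//= => /eqP v00.
  exists r => s ps.
  have : (p s * (X s - r) ^+ 2)%:E <= V := my_esum_ge1 (fun s => (p s * (X s - r) ^+ 2)%:E) s.
  rewrite Vv v00 lee_fin => h.
  have : (p s * (X s - r) ^+ 2 = 0)%R by apply/eqP; rewrite eq_le h mulr_ge0 ?sqr_ge0 ?ltW.
  move/eqP; rewrite mulf_eq0 gt_eqF//= sqrf_eq0 subr_eq0 => /eqP.
  done.
- move=> [c hc].
  have pc s : (p s * X s = p s * c)%R.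
    have [->|ps] := eqVneq (p s) 0%R; first by rewrite !mul0r.
    by rewrite /X hc// lt0r ps p0.
  have c0 : (0 <= c)%R.
    have [s ps] : exists s, (0 < p s)%R.
      apply: contrapT => H.
      have : \esum_(t in [set: S]) (p t)%:E = 0.
        apply: esum1 => t _; congr EFin; apply/eqP.
        rewrite eq_le p0 andbT leNgt; apply/negP => h; apply: H; by exists t.
      by rewrite p1 => /eqP; rewrite eqe oner_eq0.
    by rewrite -(hc s ps); exact: X0.
  have rc : r = c.
    apply: EFin_inj; rewrite -Pr /ans_prob.
    rewrite (eq_esum (b := fun s => c%:E * (p s)%:E)); last first.
      by move=> s _; rewrite -EFinM (mulrC c) -pc.
    by rewrite my_esumZ// p1 mule1.
  have : V = 0.
    apply: esum1 => s _.
    have [->|ps] := eqVneq (p s) 0%R; first by rewrite mul0r.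
    by rewrite /X hc ?lt0r ?ps ?p0// rc subrr expr2 mulr0 mulr0.
  rewrite Vv => H0; have v00 := EFin_inj H0.
  by rewrite Hc v00 mulr0 add0r.
Qed.
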